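(* Let $G$ be a finite simple graph on vertex set $\{x_1,\dots,x_n\}$ with $\operatorname{mat}(G)\geq 2$, let $\Bbbk$ be a field and $S=\Bbbk[x_1,\dots,x_n]$. Then $\operatorname{reg}(I(G)^{[2]})\geq \operatorname{aim}(G,2)+2$.
   Context: $I(G)\subseteq S$ is the edge ideal. $\operatorname{mat}(G)$ is the matching number. $I(G)^{[2]}$ is the ideal generated by the products $e_1e_2$ over all matchings $\{e_1,e_2\}$ of size $2$ (edge $\{x_i,x_j\}$ identified with $x_ix_j$). $\operatorname{reg}$ is Castelnuovo–Mumford regularity. Two edges form a gap if they are disjoint and no edge of $G$ joins a vertex of one to a vertex of the other. A sequence $(a_1,\dots,a_n)$ of integers is $k$-admissable if $a_i\ge1$ for all $i$ and $\sum a_i\le n+k-1$. For $1\le k\le\operatorname{mat}(G)$, a matching $M$ is $k$-admissable if there are nonempty pairwise disjoint $M_1,\dots,M_r\subseteq M$ with union $M$ such that edges from different $M_i$'s always form a gap in $G$, $(|M_1|,\dots,|M_r|)$ is $k$-admissable, and the induced subgraph of $G$ on $\bigcup_{e\in M_i}e$ is a forest for each $i$. $\operatorname{aim}(G,k)$ is the maximum size of a $k$-admissable matching ($0$ if none). *)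

(* Defs.v *)
From mathcomp Require Import all_boot all_order all_algebra.
From Stdlib Require Import ClassicalEpsilon.
Set Implicit Arguments. Unset Strict Implicit. Unset Printing Implicit Defensive.
Import GRing.Theory.
Local Open Scope ring_scope.

Definition propb (P : Prop) : bool :=
  if excluded_middle_informative P then true else false.

Section Defs.
Variable n : nat.

(* A finite simple graph on vertices 'I_n (vertex i <-> variable x_i) is a
   symmetric irreflexive relation e. *)
Definition simple_graph (e : rel 'I_n) := symmetric e /\ irreflexive e.

Definition is_edge (e : rel 'I_n) (E : {set 'I_n}) : bool :=
  [exists u, exists v, (e u v) && (E == [set u; v])].

Definition is_matching (e : rel 'I_n) (M : {set {set 'I_n}}) : bool :=
  [forall E in M, is_edge e E] &&
  [forall E1 in M, forall E2 in M, (E1 != E2) ==> [disjoint E1 & E2]].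

Definition mat (e : rel 'I_n) : nat :=
  (\max_(M : {set {set 'I_n}} | is_matching e M) #|M|)%N.

Definition gap (e : rel 'I_n) (E1 E2 : {set 'I_n}) : bool :=
  [disjoint E1 & E2] && [forall u in E1, forall v in E2, ~~ e u v].

Definition induced_forest (e : rel 'I_n) (V : {set 'I_n}) : Prop :=
  forall s : seq 'I_n, uniq s -> (3 <= size s)%N -> {subset s <= V} ->
    ~~ cycle e s.

Definition adm_seq (k : nat) (s : seq nat) : bool :=
  all (fun a => 0 < a)%N s && (sumn s <= size s + k - 1)%N.

Definition k_admissible (e : rel 'I_n) (k : nat) (M : {set {set 'I_n}}) : Prop :=
  is_matching e M /\
  exists P : {set {set {set 'I_n}}},
    partition P M /\
    (forall Mi Mj, Mi \in P -> Mj \in P -> Mi != Mj ->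
       forall E1 E2, E1 \in Mi -> E2 \in Mj -> gap e E1 E2) /\
    adm_seq k (map (fun Mi : {set {set 'I_n}} => #|Mi|) (enum P)) /\
    (forall Mi, Mi \in P -> induced_forest e (cover Mi)).

Definition aim (e : rel 'I_n) (k : nat) : nat :=
  (\max_(M : {set {set 'I_n}} | propb (k_admissible e k M)) #|M|)%N.

(* A monomial ideal is represented by the predicate on exponent vectors
   b : 'I_n -> nat telling whether x^b belongs to the ideal. *)

(* I(G)^[2]: generated by e1 e2, {e1,e2} a matching of size 2; x^b lies in it
   iff x^b is divisible by such a generator. *)
Definition I2_mem (e : rel 'I_n) (b : 'I_n -> nat) : bool :=
  [exists M : {set {set 'I_n}},
     [&& is_matching e M, #|M| == 2%N & [forall v in cover M, 0 < b v]%N]].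

(* Multigraded Koszul complex K(x_1..x_n) (x) I in multidegree a:
   K_i (x) I in degree a has basis e_F, |F| = i, e_F <= a, x^(a - e_F) in I. *)
Definition kbasis (mem : ('I_n -> nat) -> bool) (i : nat) (a : 'I_n -> nat)
  : {set {set 'I_n}} :=
  [set F : {set 'I_n} | [&& #|F| == i, [forall j in F, 0 < a j]%N &
                           mem (fun j => a j - (j \in F))%N]].

(* matrix of the Koszul differential K_{i+1} (x) I -> K_i (x) I in degree a
   (row convention), indexed by all subsets of 'I_n *)
Definition kdiff (K : fieldType) (mem : ('I_n -> nat) -> bool) (i : nat)
  (a : 'I_n -> nat) : 'M[K]_(#|{set 'I_n}|) :=
  \matrix_(p, q)
    (let F := enum_val p in let F' := enum_val q in
     if [&& F \in kbasis mem i.+1 a, F' \in kbasis mem i a & F' \subset F]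
     then \sum_(j in F :\: F') (-1) ^+ #|[set l in F | (l < j)%N]|
     else 0).

(* multigraded Betti number beta_{i,a}(I) = dim_K Tor_i^S(K, I)_a
   = dim H_i(K(x) (x) I)_a *)
Definition betti (K : fieldType) (mem : ('I_n -> nat) -> bool) (i : nat)
  (a : 'I_n -> nat) : nat :=
  (#|kbasis mem i a| - (if i is i'.+1 then \rank (kdiff K mem i' a) else 0)
     - \rank (kdiff K mem i a))%N.

(* reg(I) = max { j - i : beta_{i,j}(I) != 0 }, beta_{i,j} = sum_{|a|=j} beta_{i,a};
   "reg(I) >= r" *)
Definition reg_at_least (K : fieldType) (mem : ('I_n -> nat) -> bool) (r : nat)
  : Prop :=
  exists (i : nat) (a : 'I_n -> nat),
    betti K mem i a != 0%N /\ (r + i <= \sum_(j < n) a j)%N.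

End Defs.

(* Main.v *)
Require Import Defs.
From mathcomp Require Import all_boot all_order all_algebra.
From mathcomp Require Import zify.
From Stdlib Require Import ClassicalEpsilon.
Set Implicit Arguments. Unset Strict Implicit. Unset Printing Implicit Defensive.
Import GRing.Theory.
Local Open Scope ring_scope.

Section Alg.
Variable n : nat.
Variable K : fieldType.

Definition sgn (F : {set 'I_n}) (j : 'I_n) : K :=
  (-1) ^+ #|[set l in F | (l < j)%N]|.

Lemma sgn_swap (G : {set 'I_n}) j l : j \in G -> l \in G -> j != l ->
  sgn G j * sgn (G :\ j) l + sgn G l * sgn (G :\ l) j = 0.
Proof.
wlog jl : j l / (j < l)%N.
  move=> H jG lG jnl; case: (ltngtP j l) => c.
  - exact: H.
  - by rewrite addrC; apply: H => //; rewrite eq_sym.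
  - by move: jnl; rewrite (val_inj c) eqxx.
move=> jG lG jnl.
have E1 : [set x in G | (x < l)%N] = j |: [set x in G :\ j | (x < l)%N].
  apply/setP => x; rewrite !inE; case: (eqVneq x j) => [->|//]; by rewrite jG jl.
have E2 : [set x in G :\ l | (x < j)%N] = [set x in G | (x < j)%N].
  apply/setP => x; rewrite !inE; case: (eqVneq x l) => [->|//] /=.
  by rewrite ltnNge (ltnW jl) andbF.
rewrite /sgn E1 E2 cardsU1 !inE eqxx /= add1n exprS.
by rewrite mulN1r mulNr [X in _ - X]mulrC subrr.
Qed.


Lemma dd_formal (G F : {set 'I_n}) : #|G| = (#|F| + 2)%N ->
  \sum_(j in G) sgn G j * (if F \subset G :\ j then
      \sum_(l in (G :\ j) :\: F) sgn (G :\ j) l else 0) = 0.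
Proof.
case: (boolP (F \subset G)) => FG; last first.
  move=> _; apply: big1 => j jG; rewrite ifF ?mulr0 //.
  apply/negbTE; apply: contra FG => /subset_trans; apply; exact: subD1set.
move=> cG.
have c2 : #|G :\: F| == 2%N by rewrite cardsD (setIidPr FG) cG addKn.
case/cards2P: c2 => j [l [jnl EGF]].
have hGF x : (x \in G) && (x \notin F) = (x == j) || (x == l).
  by move/setP: EGF => /(_ x); rewrite !inE andbC.
have /andP[jG jF] : (j \in G) && (j \notin F) by rewrite hGF eqxx.
have /andP[lG lF] : (l \in G) && (l \notin F) by rewrite hGF eqxx orbT.
rewrite (bigD1 j) // (bigD1 l) /=; last by rewrite lG eq_sym jnl.
rewrite [X in _ + (_ + X)]big1 ?addr0; last first.
  move=> k /andP[/andP[kG kj] kl]; rewrite ifF ?mulr0 //.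
  have kF : k \in F by move: (hGF k); rewrite kG (negbTE kj) (negbTE kl) /= => /negbFE.
  apply/negbTE/negP => /subsetP /(_ k kF); by rewrite !inE eqxx.
have sub1 x y : x \in G -> y \in G -> x != y -> (x \notin F) -> (y \notin F) ->
   (forall z, (z == j) || (z == l) = (z == x) || (z == y)) ->
   F \subset G :\ x /\ (G :\ x) :\: F = [set y].
  move=> xG yG xy xF yF hxy; split.
    apply/subsetP => z zF; rewrite !inE (subsetP FG _ zF) andbT.
    by apply: contraNneq xF => <-.
  apply/setP => z; rewrite !inE; case: (eqVneq z y) => [->|zy].
    by rewrite yG yF eq_sym xy.
  case: (eqVneq z x) => //= zx; case zG: (z \in G); rewrite ?andbF //=.
  by rewrite andbT; move: (hGF z); rewrite hxy zG (negbTE zx) (negbTE zy) /= => ->.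
have [s1 e1] := sub1 j l jG lG jnl jF lF (fun z => erefl).
have [s2 e2] := sub1 l j lG jG (ltac:(by rewrite eq_sym)) lF jF (fun z => orbC _ _).
rewrite s1 e1 s2 e2 !big_set1; exact: sgn_swap.
Qed.

Lemma sum_facets (f : {set 'I_n} -> K) (G : {set 'I_n}) :
  (forall F, f F != 0 -> F \subset G /\ #|F|.+1 = #|G|) ->
  \sum_F f F = \sum_(j in G) f (G :\ j).
Proof.
move=> hf.
rewrite (bigID (fun F => F \in [set G :\ j | j in G])) /=.
rewrite [X in _ + X]big1 ?addr0; last first.
  move=> F FnI; apply/eqP; apply: contraR FnI => /hf [FG cF].
  have : #|G :\: F| == 1%N by rewrite cardsD (setIidPr FG) -cF subSnn.
  case/cards1P => j EGF.
  have jG : j \in G by move/setP: EGF => /(_ j); rewrite !inE eqxx => /andP[].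
  apply/imsetP; exists j => //; apply/setP => x; rewrite !inE.
  move/setP: EGF => /(_ x); rewrite !inE.
  case: (eqVneq x j) => [->|xj] /=.
    by rewrite jG andbT => /negbTE.
  case xG: (x \in G); rewrite ?andbT ?andbF /=.
    by move/negbFE.
  by move=> _; apply/negbTE/negP => /(subsetP FG); rewrite xG.
rewrite big_imset //= => x y xG yG Exy.
apply/eqP; apply: contraT => xy.
by move/setP: Exy => /(_ x); rewrite !inE eqxx xG xy.
Qed.

Section Kos.
Variable mem : ('I_n -> nat) -> bool.
Hypothesis memmono : forall b b', (forall j, (0 < b j)%N -> (0 < b' j)%N) -> mem b -> mem b'.
Variable a : 'I_n -> nat.

Definition Dm i (F F' : {set 'I_n}) : K :=
  if [&& F \in kbasis mem i.+1 a, F' \in kbasis mem i a & F' \subset F]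
  then \sum_(j in F :\: F') sgn F j else 0.

Lemma kdiffE i : kdiff K mem i a = \matrix_(p, q) Dm i (enum_val p) (enum_val q).
Proof. by []. Qed.

Lemma sumE (f : {set 'I_n} -> K) :
  \sum_(p < #|{set 'I_n}|) f (enum_val p) = \sum_F f F.
Proof. symmetry; exact: (big_enum_val (A := predT) f). Qed.

Lemma kb_card i F : F \in kbasis mem i a -> #|F| = i.
Proof. by rewrite inE => /and3P[/eqP]. Qed.

Lemma kb_facet k G j : G \in kbasis mem k.+1 a -> j \in G -> G :\ j \in kbasis mem k a.
Proof.
rewrite !inE => /and3P[/eqP cG /forall_inP pG mG] jG.
apply/and3P; split.
- by move: (cardsD1 j G); rewrite jG cG add1n => -[<-].
- by apply/forall_inP => x; rewrite !inE => /andP[_ /pG].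
- apply: memmono mG => x; rewrite !inE.
  by case: (x \in G); case: (x != j) => //=; rewrite subn0; case: (a x).
Qed.

Lemma Dm_facet k G j : G \in kbasis mem k.+1 a -> j \in G -> Dm k G (G :\ j) = sgn G j.
Proof.
move=> Gk jG; rewrite /Dm Gk kb_facet // subD1set /=.
have -> : G :\: (G :\ j) = [set j].
  apply/setP => x; rewrite !inE; case: (eqVneq x j) => [->|xj] /=; [by rewrite jG | by case: (x \in G)].
by rewrite big_set1.
Qed.

Lemma Dm_nz k F F' : Dm k F F' != 0 ->
  [/\ F \in kbasis mem k.+1 a, F' \in kbasis mem k a & F' \subset F].
Proof. by rewrite /Dm; case H: [&& _, _ & _]; [case/and3P: H | rewrite eqxx]. Qed.

Lemma Dm_low k F F' : F \in kbasis mem k.+1 a -> F' \in kbasis mem k a ->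
  Dm k F F' = if F' \subset F then \sum_(j in F :\: F') sgn F j else 0.
Proof. by move=> h1 h2; rewrite /Dm h1 h2. Qed.

Lemma sum_facets_Dm k G (g : {set 'I_n} -> K) :
  G \in kbasis mem k.+2 a ->
  \sum_F Dm k.+1 G F * g F = \sum_(j in G) sgn G j * g (G :\ j).
Proof.
move=> Gk; rewrite (sum_facets (G := G)).
  by apply: eq_bigr => j jG; rewrite Dm_facet.
move=> F; rewrite mulf_eq0 negb_or => /andP[/Dm_nz[h1 h2 h3] _]; split => //.
by rewrite (kb_card h1) (kb_card h2).
Qed.

Lemma dd0 i G F'' : \sum_F Dm i.+1 G F * Dm i F F'' = 0.
Proof.
case: (boolP (G \in kbasis mem i.+2 a)) => Gk; last first.
  apply: big1 => F _; rewrite /Dm; case: and3P => [[]|]; by rewrite ?(negbTE Gk) ?mul0r.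
rewrite sum_facets_Dm //.
case: (boolP (F'' \in kbasis mem i a)) => Fk; last first.
  by apply: big1 => j _; rewrite /Dm (negbTE Fk) andbF mulr0.
rewrite -[RHS](dd_formal (G := G) (F := F'')); last by rewrite (kb_card Gk) (kb_card Fk) addn2.
by apply: eq_bigr => j jG; rewrite Dm_low // kb_facet.
Qed.


Lemma betti_nz i (zf phi : {set 'I_n} -> K) :
  (forall F, zf F != 0 -> F \in kbasis mem i.+1 a) ->
  (forall F', \sum_F zf F * Dm i F F' = 0) ->
  (forall G, G \in kbasis mem i.+2 a -> \sum_F Dm i.+1 G F * phi F = 0) ->
  \sum_F zf F * phi F != 0 ->
  betti K mem i.+1 a != 0%N.
Proof.
move=> zsupp zcyc phicoc zphi.
set N := #|{set 'I_n}|.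
set kb := kbasis mem i.+1 a.
set A := kdiff K mem i a.
set B := kdiff K mem i.+1 a.
pose z : 'rV[K]_N := \row_p zf (enum_val p).
pose ph : 'cV[K]_N := \col_p phi (enum_val p).
pose P : 'M[K]_N := \matrix_(p, q) ((p == q) && (enum_val p \in kb))%:R.
have BA : B *m A = 0.
  apply/matrixP => p q; rewrite !mxE.
  rewrite (eq_bigr (fun k => Dm i.+1 (enum_val p) (enum_val k) * Dm i (enum_val k) (enum_val q))); last by move=> k _; rewrite /B /A !kdiffE !mxE.
  by rewrite (sumE (fun F => Dm i.+1 (enum_val p) F * Dm i F (enum_val q))) dd0.
have zA : z *m A = 0.
  apply/matrixP => p q; rewrite !mxE.
  rewrite (eq_bigr (fun k => zf (enum_val k) * Dm i (enum_val k) (enum_val q))); last by move=> k _; rewrite /A !kdiffE !mxE.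
  by rewrite (sumE (fun F => zf F * Dm i F (enum_val q))) zcyc.
have Bph : B *m ph = 0.
  apply/matrixP => p q; rewrite !mxE.
  rewrite (eq_bigr (fun k => Dm i.+1 (enum_val p) (enum_val k) * phi (enum_val k))); last by move=> k _; rewrite /B !kdiffE !mxE.
  rewrite (sumE (fun F => Dm i.+1 (enum_val p) F * phi F)).
  case: (boolP (enum_val p \in kbasis mem i.+2 a)) => hp; first exact: phicoc.
  by apply: big1 => F _; rewrite /Dm (negbTE hp) mul0r.
have zph : (z *m ph) 0 0 != 0.
  rewrite !mxE (eq_bigr (fun k => zf (enum_val k) * phi (enum_val k))); last by move=> k _; rewrite !mxE.
  by rewrite (sumE (fun F => zf F * phi F)).
have BP : B *m P = B.
  apply/matrixP => p q; rewrite !mxE (bigD1 q) //= big1 ?addr0; last first.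
    by move=> k kq; rewrite !mxE (negbTE kq) mulr0.
  rewrite !mxE eqxx /=; case: (boolP (enum_val q \in kb)) => hq; first by rewrite mulr1.
  by rewrite /= andbF mulr0.
have zP : z *m P = z.
  apply/matrixP => p q; rewrite !mxE (bigD1 q) //= big1 ?addr0; last first.
    by move=> k kq; rewrite !mxE (negbTE kq) mulr0.
  rewrite !mxE eqxx /=; case: (boolP (enum_val q \in kb)) => hq; first by rewrite mulr1.
  rewrite mulr0; apply/esym/eqP; apply: contraR hq; exact: zsupp.
have PA : P *m A = A.
  apply/matrixP => p q; rewrite !mxE (bigD1 p) //= big1 ?addr0; last first.
    by move=> k kp; rewrite !mxE eq_sym (negbTE kp) mul0r.
  rewrite !mxE eqxx /=; case: (boolP (enum_val p \in kb)) => hp; first by rewrite mul1r.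
  by rewrite mul0r.
have rP : (\rank P <= #|kb|)%N.
  have -> : P = \sum_(F in kb) delta_mx (enum_rank F) (enum_rank F).
    apply/matrixP => p q; rewrite summxE !mxE.
    case: (boolP (enum_val p \in kb)) => hp.
      rewrite (bigD1 (enum_val p)) //= big1 ?addr0; last first.
        move=> F /andP[_ Fp]; rewrite mxE; case: eqP => // ep; move: Fp.
        by rewrite ep enum_rankK eqxx.
      by rewrite mxE enum_valK eqxx /= andbT eq_sym.
    rewrite big1; first by case: (p == q).
    move=> F FK; rewrite mxE; case: eqP => //= ep; by move: hp; rewrite ep enum_rankK FK.
  have -> : #|kb| = (\sum_(F in kb) 1)%N by rewrite sum1_card.
  apply: (big_ind2 (fun (M : 'M[K]_N) (k : nat) => \rank M <= k)%N).
  - by rewrite mxrank0.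
  - by move=> M1 k1 M2 k2 h1 h2; exact: leq_trans (mxrank_add _ _) (leq_add h1 h2).
  - by move=> F _; rewrite mxrank_delta.
have sBcap : (B <= P :&: kermx A)%MS.
  by rewrite sub_capmx; apply/andP; split; [rewrite -{1}BP submxMl | apply/sub_kermxP].
have szcap : (z <= P :&: kermx A)%MS.
  by rewrite sub_capmx; apply/andP; split; [rewrite -{1}zP submxMl | apply/sub_kermxP].
have nzB : ~~ (z <= B)%MS.
  apply/negP => /submxP [w zw]; move: zph; rewrite zw -mulmxA Bph mulmx0 mxE eqxx //.
have lt : (B < P :&: kermx A)%MS.
  rewrite ltmxE sBcap /=; apply: contra nzB => capB; exact: submx_trans szcap capB.
have r1 := rank_ltmx lt.
have r2 := mxrank_sum_cap P (kermx A).
have r3 : \rank (P + kermx A)%MS = N.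
  apply/eqP; rewrite eqn_leq rank_leq_col /= -{1}(mxrank1 K N) mxrankS //.
  have -> : (1%:M : 'M[K]_N) = P + (1 - P) by rewrite addrC subrK.
  apply: addmx_sub_adds; first exact: submx_refl.
  by apply/sub_kermxP; rewrite mulmxBl mul1mx PA subrr.
have r4 := mxrank_ker A.
have r5 := rank_leq_row A.
rewrite /betti -/kb -/A -/B.
rewrite -/N in r4 r5. move: r1 r2 r3 r4 r5 rP. set x1 := \rank A. set x2 := \rank B. set x3 := \rank P. set x4 := \rank (P :&: kermx A). set x5 := \rank (kermx A). set x6 := \rank (P + kermx A). lia.
Qed.

End Kos.
End Alg.

Section Parity.
Local Open Scope nat_scope.
Variable n : nat.
Variable r : 'I_n -> nat.

Definition inv (x y : 'I_n) : nat := ((x < y)%N && (r y < r x)%N).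
Definition Ninv (X : {set 'I_n}) : nat := (\sum_(x in X) \sum_(y in X) inv x y)%N.

Lemma inv_xx x : inv x x = 0%N.
Proof. by rewrite /inv ltnn. Qed.

Lemma Ninv_U1 (x : 'I_n) (X : {set 'I_n}) : x \notin X ->
  Ninv (x |: X) = (Ninv X + \sum_(y in X) (inv x y + inv y x))%N.
Proof.
move=> xX; rewrite /Ninv.
under eq_bigr do rewrite big_setU1 //=.
rewrite big_setU1 //= inv_xx add0n !big_split /=; lia.
Qed.

Lemma even_sum (P : pred 'I_n) (h : 'I_n -> nat) :
  (forall y, P y -> ~~ odd (h y)) -> ~~ odd (\sum_(y | P y) h y).
Proof.
move=> H; apply: (big_ind (fun x => ~~ odd x)) => //.
by move=> x y hx hy; rewrite oddD (negbTE hx) (negbTE hy).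
Qed.

Lemma even_term (y t t' ry rt : nat) : y != t -> y != t' -> ry != rt ->
  ~~ odd ((y < t)%N + (y < t')%N + ((t < y)%N && (ry < rt)%N) + ((y < t)%N && (rt < ry)%N)
      + ((t' < y)%N && (ry < rt)%N) + ((y < t')%N && (rt < ry)%N)).
Proof.
move=> h1 h2 h3.
case: (ltngtP y t) h1 => [a|a|e]; last by [].
all: move=> _; case: (ltngtP y t') h2 => [b|b|e]; last by [].
all: move=> _; case: (ltngtP ry rt) h3 => [c|c|e]; last by [].
all: by [].
Qed.

Lemma parity (G : {set 'I_n}) t t' : t \in G -> t' \in G -> t != t' -> r t = r t' ->
  (forall y, y \in G -> y != t -> y != t' -> r y != r t) ->
  odd (#|[set l in G | (l < t)%N]| + Ninv (G :\ t) + #|[set l in G | (l < t')%N]| + Ninv (G :\ t')).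
Proof.
move=> tG t'G tt' rtt' hr.
have e1 : Ninv G = (Ninv (G :\ t) + \sum_(y in G) (inv t y + inv y t))%N.
  rewrite -{1}(setD1K tG) Ninv_U1 ?setD1E ?inE ?eqxx //.
  by rewrite [in RHS](big_setD1 t) //= inv_xx.
have e2 : Ninv G = (Ninv (G :\ t') + \sum_(y in G) (inv t' y + inv y t'))%N.
  rewrite -{1}(setD1K t'G) Ninv_U1 ?setD1E ?inE ?eqxx //.
  by rewrite [in RHS](big_setD1 t') //= inv_xx.
have c1 : forall x, #|[set l in G | (l < x)%N]| = (\sum_(y in G) (y < x)%N)%N.
  move=> x; rewrite -sum1_card big_mkcond [in RHS]big_mkcond /=.
  by apply: eq_bigr => y _; rewrite inE; case: (y \in G); case: (y < x)%N.
set S := (\sum_(y in G) ((y < t)%N + (y < t')%N + inv t y + inv y t + inv t' y + inv y t'))%N.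
have eS : (#|[set l in G | (l < t)%N]| + Ninv (G :\ t) + #|[set l in G | (l < t')%N]| + Ninv (G :\ t') + 2 * Ninv G
   = S + 2 * (Ninv (G :\ t) + Ninv (G :\ t')))%N.
  move: e1 e2; rewrite /S !big_split /= -!c1. set A3 := \sum_(i in G) inv t i. set A4 := \sum_(i in G) inv i t. set A5 := \sum_(i in G) inv t' i. set A6 := \sum_(i in G) inv i t'. move: A3 A4 A5 A6 (Ninv G) (Ninv (G :\ t)) (Ninv (G :\ t')) (#|[set l in G | (l < t)%N]|) (#|[set l in G | (l < t')%N]|). lia.
suff : odd S.
  move=> oS; move/(congr1 odd): eS; rewrite oddD [odd (2 * _)]oddM /= addbF => ->.
  by rewrite oddD oddM /= addbF.
rewrite /S (bigD1 t) //= (bigD1 t') /=; last by rewrite t'G eq_sym.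
set R := \sum_(i | _) _.
have oR : ~~ odd R.
  apply: even_sum => y /andP[/andP[yG yt] yt'].
  rewrite /inv -rtt'; apply: even_term => //; exact: hr.
rewrite !oddD (negbTE oR) addbF !inv_xx /inv rtt' !ltnn !andbF /=.
move: tt'; rewrite -val_eqE /=; by case: (ltngtP t t').
Qed.

End Parity.

Lemma sign_odd_sum (K : fieldType) (x y : nat) : odd (x + y) -> (-1) ^+ x + (-1) ^+ y = 0 :> K.
Proof.
rewrite oddD => h; rewrite -signr_odd -[(-1) ^+ y]signr_odd.
by move: h; case: (odd x); case: (odd y) => //= _; rewrite expr1 expr0 ?subrr // addrC subrr.
Qed.

Section Basics.
Variable n : nat.
Variable e : rel 'I_n.
Hypothesis sg : simple_graph e.

Lemma is_edge_card E : is_edge e E -> #|E| = 2%N.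
Proof.
case/existsP => u /existsP [v /andP[euv /eqP ->]]; rewrite cards2.
have : u != v by apply: contraTneq euv => ->; rewrite (proj2 sg).
by move=> ->.
Qed.

Lemma matching_edge (M : {set {set 'I_n}}) E : is_matching e M -> E \in M -> is_edge e E.
Proof. by case/andP => /forall_inP h _ /h. Qed.

Lemma matching_disj (M : {set {set 'I_n}}) E1 E2 x : is_matching e M -> E1 \in M -> E2 \in M ->
  x \in E1 -> x \in E2 -> E1 = E2.
Proof.
case/andP => _ /forall_inP h E1M E2M xE1 xE2.
move: (h E1 E1M) => /forall_inP /(_ E2 E2M) /implyP.
case: (eqVneq E1 E2) => // _ /(_ isT) /disjoint_setI0 /setP /(_ x).
by rewrite !inE xE1 xE2.
Qed.

Lemma matching_sub (M M' : {set {set 'I_n}}) : is_matching e M -> M' \subset M -> is_matching e M'.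
Proof.
case/andP => /forall_inP h1 /forall_inP h2 sub; apply/andP; split.
  by apply/forall_inP => E /(subsetP sub) /h1.
apply/forall_inP => E1 /(subsetP sub) E1M; apply/forall_inP => E2 /(subsetP sub) E2M.
by move: (h2 E1 E1M) => /forall_inP /(_ E2 E2M).
Qed.

Lemma matching_cover_card (M : {set {set 'I_n}}) : is_matching e M -> #|cover M| = (2 * #|M|)%N.
Proof.
move=> hM.
have tI : trivIset M.
  apply/trivIsetP => E1 E2 E1M E2M ne; move: hM => /andP[_ /forall_inP h].
  by move: (h E1 E1M) => /forall_inP /(_ E2 E2M) /implyP /(_ ne).
move/eqP: tI => <-.
rewrite (eq_bigr (fun _ => 2%N)); last by move=> E EM; apply: is_edge_card; exact: matching_edge hM EM.
by rewrite sum_nat_const mulnC.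
Qed.

Lemma I2_mono b b' : (forall j, (0 < b j)%N -> (0 < b' j)%N) -> I2_mem e b -> I2_mem e b'.
Proof.
move=> h /existsP [M /and3P[h1 h2 /forall_inP h3]]; apply/existsP; exists M.
by rewrite h1 h2 /=; apply/forall_inP => v /h3 /h.
Qed.

End Basics.

Section Main.
Variable n : nat.
Variable e : rel 'I_n.
Variable K : fieldType.
Hypothesis sg : simple_graph e.
Variables (M : {set {set 'I_n}}) (p q : {set 'I_n}) (u : 'I_n).
Hypotheses (hM : is_matching e M) (pM : p \in M) (qM : q \in M) (pq : p != q) (up : u \in p).
Hypothesis hgood : forall E', is_edge e E' -> E' \subset cover M -> (E' \in M) || (E' \subset p :|: q).
Hypothesis m3 : (3 <= #|M|)%N.

Let W := cover M.
Let E0 := M :\: [set p; q].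
Let U := cover E0.
Definition aW : 'I_n -> nat := fun j => (j \in W : nat).

Lemma edge_card E : E \in M -> #|E| = 2%N.
Proof. by move=> EM; apply: (is_edge_card sg); exact: matching_edge hM EM. Qed.

Lemma mdisj E1 E2 x : E1 \in M -> E2 \in M -> x \in E1 -> x \in E2 -> E1 = E2.
Proof. exact: matching_disj hM. Qed.

Lemma inWP x : reflect (exists2 E, E \in M & x \in E) (x \in W).
Proof. exact: bigcupP. Qed.

Lemma inUP x : reflect (exists2 E, E \in E0 & x \in E) (x \in U).
Proof. exact: bigcupP. Qed.

Lemma E0P E : (E \in E0) = [&& E != p, E != q & E \in M].
Proof. by rewrite !inE negb_or andbA. Qed.

Lemma U_pq x : x \in U -> (x \notin p) && (x \notin q).
Proof.
case/inUP => E; rewrite E0P => /and3P[Ep Eq EM] xE.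
apply/andP; split; apply/negP => xpq.
  by move: Ep; rewrite (mdisj EM pM xE xpq) eqxx.
by move: Eq; rewrite (mdisj EM qM xE xpq) eqxx.
Qed.

Lemma W_split x : x \in W -> x \notin U -> x \in p :|: q.
Proof.
case/inWP => E EM xE xU; rewrite inE.
case: (eqVneq E p) => [<-|Ep]; first by rewrite xE.
case: (eqVneq E q) => [<-|Eq]; first by rewrite xE orbT.
have xU' : x \in U by apply/inUP; exists E => //; rewrite E0P Ep Eq EM.
by rewrite xU' in xU.
Qed.

Lemma UW : U \subset W.
Proof. apply/subsetP => x /inUP [E]; rewrite E0P => /and3P[_ _ EM] xE; apply/inWP; by exists E. Qed.

Lemma pW : p \subset W.
Proof. by apply/subsetP => x xp; apply/inWP; exists p. Qed.

Lemma qW : q \subset W.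
Proof. by apply/subsetP => x xq; apply/inWP; exists q. Qed.

Lemma cardE0 : #|E0| = (#|M| - 2)%N.
Proof.
rewrite cardsD.
have -> : M :&: [set p; q] = [set p; q].
  by apply/setIidPr; apply/subsetP => x; rewrite !inE => /orP[] /eqP ->.
by rewrite cards2 pq.
Qed.

Definition pk (E : {set 'I_n}) : 'I_n := odflt u [pick x in E].

Lemma pk_in E : E \in M -> pk E \in E.
Proof.
move=> EM; rewrite /pk; case: pickP => //= h.
by move: (edge_card EM); rewrite (eq_card0 h).
Qed.

Definition T0 : {set 'I_n} := [set pk E | E in E0].

Lemma E0M E : E \in E0 -> E \in M.
Proof. by rewrite E0P => /and3P[]. Qed.

Lemma T0U : T0 \subset U.
Proof. apply/subsetP => x /imsetP [E EE0 ->]; apply/inUP; exists E => //; exact: pk_in (E0M EE0). Qed.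

Lemma T0E E : E \in E0 -> T0 :&: E = [set pk E].
Proof.
move=> EE0; apply/setP => x; rewrite !inE.
apply/andP/eqP => [[/imsetP [E' E'E0 ->] xE]|->].
  by rewrite (mdisj (E0M EE0) (E0M E'E0) xE (pk_in (E0M E'E0))).
by split; [apply/imsetP; exists E | exact: pk_in (E0M EE0)].
Qed.

Lemma cardT0 : #|T0| = #|E0|.
Proof.
rewrite card_in_imset // => E1 E2 h1 h2 eq.
apply: (mdisj (E0M h1) (E0M h2) (pk_in (E0M h1))); rewrite eq; exact: pk_in (E0M h2).
Qed.


Definition tau := u |: T0.

Lemma uU : u \notin U.
Proof. by apply/negP => /U_pq; rewrite up. Qed.

Lemma uT0 : u \notin T0.
Proof. by apply/negP => /(subsetP T0U); apply/negP; exact: uU. Qed.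

Lemma card_tau : #|tau| = (#|M| - 1)%N.
Proof. rewrite cardsU1 uT0 cardT0 cardE0; lia. Qed.

Lemma tauW : tau \subset W.
Proof.
apply/subsetP => x; rewrite /tau !inE => /orP[/eqP ->|/(subsetP T0U) /(subsetP UW)] //.
exact: (subsetP pW).
Qed.

Definition trans (T : {set 'I_n}) : bool :=
  (T \subset U) && [forall E in E0, #|T :&: E| == 1%N].

Definition rk (x : 'I_n) : nat := enum_rank [set E in M | x \in E].

Lemma rk_set E x : E \in M -> x \in E -> [set E' in M | x \in E'] = [set E].
Proof.
move=> EM xE; apply/setP => E'; rewrite !inE.
apply/andP/eqP => [[E'M xE']|->] //; exact: mdisj E'M EM xE' xE.
Qed.

Lemma rk_eq E1 E2 x y : E1 \in M -> E2 \in M -> x \in E1 -> y \in E2 ->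
  (rk x == rk y) = (E1 == E2).
Proof.
move=> h1 h2 h3 h4; rewrite /rk (rk_set h1 h3) (rk_set h2 h4).
by rewrite val_eqE (inj_eq enum_rank_inj) (inj_eq (@set1_inj _)).
Qed.

Definition phi (F : {set 'I_n}) : K := if trans F then (-1) ^+ Ninv rk F else 0.
Definition zf (F : {set 'I_n}) : K := \sum_(j in tau) (F == tau :\ j)%:R * sgn K tau j.

Lemma kbP k F : F \in kbasis (I2_mem e) k aW =
  [&& #|F| == k, F \subset W & I2_mem e (fun j => aW j - (j \in F))%N].
Proof.
rewrite inE; congr (_ && (_ && _)).
apply/idP/idP.
  by move/forall_inP => h; apply/subsetP => x /h; rewrite /aW lt0b.
by move/subsetP => h; apply/forall_inP => x /h; rewrite /aW lt0b.
Qed.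

Lemma kb_mem (F E1 E2 : {set 'I_n}) : F \subset W -> E1 \in M -> E2 \in M -> E1 != E2 ->
  [disjoint E1 :|: E2 & F] -> I2_mem e (fun j => aW j - (j \in F))%N.
Proof.
move=> FW h1 h2 ne dis; apply/existsP; exists [set E1; E2].
apply/and3P; split.
- apply: (matching_sub hM); apply/subsetP => x; rewrite !inE => /orP[] /eqP -> //.
- by rewrite cards2 ne.
- apply/forall_inP => v /bigcupP [E]; rewrite !inE => /orP[] /eqP -> vE.
  + have vW : v \in W by apply/inWP; exists E1.
    have vF : v \notin F by rewrite (disjointFr dis) // inE vE.
    by rewrite /aW vW (negbTE vF).
  + have vW : v \in W by apply/inWP; exists E2.
    have vF : v \notin F by rewrite (disjointFr dis) // inE vE orbT.
    by rewrite /aW vW (negbTE vF).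
Qed.


Let kk := (#|M| - 3)%N.
Lemma arith1 (x y : nat) : (2 < x)%N -> (x - 1)%N = (1 + y)%N -> y = (x - 3).+1.
Proof. lia. Qed.
Let mem := I2_mem e.

Lemma memmono : forall b b', (forall j, (0 < b j)%N -> (0 < b' j)%N) -> mem b -> mem b'.
Proof. move=> b b' h; exact: I2_mono. Qed.

Lemma disjP (A B : {set 'I_n}) : (forall x, x \in A -> x \in B -> False) -> [disjoint A & B].
Proof.
move=> h; rewrite -setI_eq0; apply/eqP/setP => x; rewrite !inE.
by apply/negbTE/negP => /andP[h1 h2]; exact: h x h1 h2.
Qed.

Lemma pq_disj x : x \in p -> x \in q -> False.
Proof. by move=> xp xq; move: pq; rewrite (mdisj pM qM xp xq) eqxx. Qed.

Lemma tau_kb j : j \in tau -> tau :\ j \in kbasis mem kk.+1 aW.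
Proof.
move=> jt; rewrite kbP; apply/and3P; split.
- apply/eqP; move: (cardsD1 j tau); rewrite jt card_tau /kk /= => h; exact: arith1 m3 h.
- exact: subset_trans (subD1set _ _) tauW.
case: (eqVneq j u) => [->|ju].
  rewrite /tau setU1K ?uT0 //.
  apply: (kb_mem (subset_trans T0U UW) pM qM pq); apply: disjP => x.
  by rewrite inE => /orP[] h /(subsetP T0U) /U_pq; rewrite h // andbF.
have jT0 : j \in T0 by move: jt; rewrite /tau !inE (negbTE ju).
case/imsetP: (jT0) => E EE0 jE.
have EM := E0M EE0.
have qE : q != E by move: EE0; rewrite E0P => /and3P[_ Eq _]; rewrite eq_sym.
apply: (kb_mem (subset_trans (subD1set _ _) tauW) qM EM qE); apply: disjP => x.
rewrite /tau !inE => hx /andP[xj /orP[/eqP xu|xT0]].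
  subst x; case/orP: hx => h; first exact: pq_disj up h.
  by move: (mdisj EM pM h up) EE0 => ->; rewrite E0P eqxx.
have xU := subsetP T0U _ xT0.
case/orP: hx => h; first by move: (U_pq xU); rewrite h andbF.
have : x \in T0 :&: E by rewrite inE xT0 h.
by rewrite T0E // inE -jE (negbTE xj).
Qed.

Lemma zf_sum (g : {set 'I_n} -> K) :
  \sum_F zf F * g F = \sum_(j in tau) sgn K tau j * g (tau :\ j).
Proof.
rewrite /zf; under eq_bigr do rewrite big_distrl /=.
rewrite exchange_big /=; apply: eq_bigr => j _.
rewrite (bigD1 (tau :\ j)) //= eqxx mul1r big1 ?addr0 //.
by move=> F /negbTE ->; rewrite !mul0r.
Qed.

Lemma zsupp F : zf F != 0 -> F \in kbasis mem kk.+1 aW.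
Proof.
case: (boolP [exists j in tau, F == tau :\ j]).
  by case/exists_inP => j jt /eqP -> _; exact: tau_kb.
move=> hn; rewrite /zf big1 ?eqxx // => j jt.
have : F != tau :\ j by apply: contra hn => h; apply/exists_inP; exists j.
by move/negbTE ->; rewrite mul0r.
Qed.

Lemma zcyc F' : \sum_F zf F * Dm K mem aW kk F F' = 0.
Proof.
rewrite zf_sum.
case: (boolP (F' \in kbasis mem kk aW)) => hF'; last first.
  by apply: big1 => j _; rewrite /Dm (negbTE hF') andbF mulr0.
rewrite -[RHS](dd_formal K (G := tau) (F := F')); last first.
  by rewrite card_tau (kb_card hF') /kk; lia.
apply: eq_bigr => j jt; by rewrite Dm_low // tau_kb.
Qed.

Lemma trans_T0 : trans T0.
Proof.
rewrite /trans T0U /=; apply/forall_inP => E EE0; by rewrite T0E // cards1.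
Qed.

Lemma pairing : \sum_F zf F * phi F != 0.
Proof.
rewrite zf_sum (bigD1 u) /=; last by rewrite /tau setU11.
rewrite big1 ?addr0; last first.
  move=> j /andP[jt ju]; rewrite /phi ifF ?mulr0 //.
  apply/negbTE; rewrite /trans negb_and; apply/orP; left.
  apply/negP => /subsetP /(_ u); rewrite !inE eqxx eq_sym (negbTE ju) /= => /(_ isT).
  by apply/negP; exact: uU.
rewrite /tau setU1K ?uT0 // /phi trans_T0.
by rewrite mulf_neq0 // signr_eq0.
Qed.


Lemma pos_aW x (F : {set 'I_n}) : (0 < aW x - (x \in F))%N = (x \in W) && (x \notin F).
Proof. by rewrite /aW; case: (x \in W); case: (x \in F). Qed.

Lemma arith3 (x y : nat) : x = (1 + y)%N -> (x <= 4)%N -> (y <= 3)%N.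
Proof. lia. Qed.

Lemma arith2 (x y : nat) : x = 4%N -> (x <= y)%N -> (y <= 3)%N -> False.
Proof. lia. Qed.

Lemma trans1 T E : trans T -> E \in E0 -> exists t, T :&: E = [set t].
Proof. by case/andP => _ /forall_inP h /h /cards1P. Qed.

Lemma phicoc G : G \in kbasis mem kk.+2 aW -> \sum_F Dm K mem aW kk.+1 G F * phi F = 0.
Proof.
move=> Gk; rewrite (sum_facets_Dm memmono) //.
case: (boolP [exists j0 in G, trans (G :\ j0)]); last first.
  move=> hn; apply: big1 => j jG; rewrite /phi ifF ?mulr0 //; apply/negbTE.
  by apply: contra hn => h; apply/exists_inP; exists j.
case/exists_inP => j0 j0G tT.
move: (Gk); rewrite kbP => /and3P[_ GW Gmem].
have j0W : j0 \in W := subsetP GW _ j0G.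
case: (boolP (j0 \in U)) => j0U; last first.
  exfalso; case/existsP: Gmem => M' /and3P[hM' /eqP cM' /forall_inP hv].
  have sub : cover M' \subset (p :|: q) :\ j0.
    apply/subsetP => v /bigcupP [E' E'M' vE'].
    have hE' : is_edge e E' := matching_edge hM' E'M'.
    have E'out x : x \in E' -> (x \in W) && (x \notin G).
      by move=> xE'; rewrite -pos_aW; apply: hv; apply/bigcupP; exists E'.
    have E'W : E' \subset W by apply/subsetP => x /E'out /andP[].
    have vpq : v \in p :|: q.
      case/orP: (hgood hE' E'W) => [E'M|E'pq]; last exact: subsetP E'pq _ vE'.
      case: (eqVneq E' p) => [Ep|Ep]; first by rewrite inE -Ep vE'.
      case: (eqVneq E' q) => [Eq|Eq]; first by rewrite inE -Eq vE' orbT.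
      have E'E0 : E' \in E0 by rewrite E0P Ep Eq.
      case: (trans1 tT E'E0) => t'' h.
      have : t'' \in (G :\ j0) :&: E' by rewrite h set11.
      rewrite !inE => /andP[/andP[_ t''G] t''E'].
      by move: (E'out _ t''E'); rewrite t''G andbF.
    rewrite in_setD1 vpq andbT; apply: contraNneq (proj2 (andP (E'out _ vE'))) => ->.
    by rewrite j0G.
  have c4 : #|cover M'| = 4%N by rewrite (matching_cover_card sg hM') cM'.
  apply: (arith2 c4 (subset_leq_card sub)).
  have := cardsD1 j0 (p :|: q); rewrite (W_split j0W j0U) /=.
  move=> h; apply: (arith3 h).
  by rewrite cardsU (edge_card pM) (edge_card qM) leq_subr.
case/inUP: j0U => E EE0 j0E.
have EM := E0M EE0.
case: (trans1 tT EE0) => t hTE.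
have : t \in (G :\ j0) :&: E by rewrite hTE set11.
rewrite !inE => /andP[/andP[tj0 tG] tE].
have TU : G :\ j0 \subset U by case/andP: tT.
have others j : j \in G -> j != t -> j != j0 -> phi (G :\ j) = 0.
  move=> jG jt jj0; rewrite /phi ifF //; apply/negbTE/negP => /andP[_ /forall_inP /(_ E EE0)].
  have sub2 : [set t; j0] \subset (G :\ j) :&: E.
    apply/subsetP => x; rewrite !inE => /orP[] /eqP ->.
      by rewrite tG tE eq_sym jt.
    by rewrite j0G j0E eq_sym jj0.
  move: (subset_leq_card sub2); rewrite cards2 tj0 => h /eqP h'.
  by move: h; rewrite h'.
have transGt : trans (G :\ t).
  apply/andP; split.
    apply/subsetP => x; rewrite !inE => /andP[xt xG].
    case: (eqVneq x j0) => [->|xj0]; first by apply/inUP; exists E.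
    by apply: (subsetP TU); rewrite !inE xj0 xG.
  apply/forall_inP => E' E'E0.
  case: (eqVneq E' E) => [->|E'E].
    have -> : (G :\ t) :&: E = [set j0].
      apply/setP => x; rewrite !inE.
      case: (eqVneq x j0) => [->|xj0]; first by rewrite j0G j0E eq_sym tj0.
      apply/negbTE/negP => /andP[/andP[xt xG] xE].
      have : x \in (G :\ j0) :&: E by rewrite !inE xj0 xG xE.
      by rewrite hTE inE (negbTE xt).
    by rewrite cards1.
  have -> : (G :\ t) :&: E' = (G :\ j0) :&: E'.
    apply/setP => x; rewrite !inE.
    case xE': (x \in E'); rewrite ?andbF ?andbT //.
    have xnE : x \notin E.
      by apply/negP => xE; move: E'E; rewrite (mdisj (E0M E'E0) EM xE' xE) eqxx.
    have -> : (x != t) by apply: contraNneq xnE => ->.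
    have -> : (x != j0) by apply: contraNneq xnE => ->.
    by [].
  by case/andP: tT => _ /forall_inP /(_ E' E'E0).
rewrite (bigD1 t) // (bigD1 j0) /=; last by rewrite j0G eq_sym.
rewrite big1 ?addr0; last first.
  by move=> j /andP[/andP[jG jt] jj0]; rewrite others // mulr0.
rewrite /phi transGt tT /sgn -!exprD; apply: sign_odd_sum.
rewrite addnA.
apply: parity => //.
- apply/eqP; rewrite (rk_eq EM EM tE j0E) eqxx //.
- move=> y yG yt yj0.
  have yU : y \in U by apply: (subsetP TU); rewrite !inE yj0 yG.
  case/inUP: yU => Ey EyE0 yEy.
  rewrite (rk_eq (E0M EyE0) EM yEy tE).
  apply/negP => /eqP Eeq; subst Ey.
  have : y \in (G :\ j0) :&: E by rewrite !inE yj0 yG yEy.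
  by rewrite hTE inE (negbTE yt).
Qed.

Lemma main_betti : betti K (I2_mem e) kk.+1 aW != 0%N.
Proof. exact: (betti_nz memmono zsupp zcyc phicoc pairing). Qed.

Lemma sum_aW : (\sum_(j < n) aW j)%N = #|W|.
Proof.
rewrite -sum1_card [in RHS]big_mkcond /=; apply: eq_bigr => j _.
by rewrite /aW; case: (j \in W).
Qed.

Lemma arith4 (x y : nat) : (2 < x)%N -> y = (2 * x)%N -> (x + 2 + (x - 3).+1 <= y)%N.
Proof. lia. Qed.

Lemma reg_main : reg_at_least K (I2_mem e) (#|M| + 2).
Proof.
exists kk.+1, aW; split; first exact: main_betti.
rewrite sum_aW; apply: arith4 m3 _; by rewrite /W (matching_cover_card sg hM).
Qed.

End Main.

Local Close Scope ring_scope.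

Section Adm.
Variable n : nat.
Variable e : rel 'I_n.
Hypothesis sg : simple_graph e.

Lemma arith5 (s1 s2 c : nat) : (s1 <= c.+1)%N -> s1 = (c + s2)%N -> (s2 <= 1)%N.
Proof. lia. Qed.

Lemma arith6 (a b c : nat) : (1 < a)%N -> (1 < b)%N -> (1 < (a - 1) + ((b - 1) + c))%N.
Proof. lia. Qed.
Lemma arith7 (a c : nat) : ((a - 1) + c <= 1)%N -> (a <= 2)%N.
Proof. lia. Qed.

Lemma adm_good (M : {set {set 'I_n}}) : k_admissible e 2 M -> (1 < #|M|)%N ->
  exists p q, [/\ p \in M, q \in M, p != q &
    forall E', is_edge e E' -> E' \subset cover M -> (E' \in M) || (E' \subset p :|: q)].
Proof.
case=> hM [P [hP [hgap [hadm _]]]] M2.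
have covP : cover P = M := cover_partition hP.
have nz Mi : Mi \in P -> (0 < #|Mi|)%N.
  move=> MiP; rewrite card_gt0; apply: contraTneq MiP => ->.
  by case/and3P: hP.
have hsum : (\sum_(Mi in P) (#|Mi| - 1) <= 1)%N.
  case/andP: hadm => _; rewrite size_map -cardE sumnE big_map big_enum /= addn2 /= subn1 /=.
  move=> h; apply: (arith5 h).
  rewrite -sum1_card -big_split /=; apply: eq_bigr => Mi /nz hMi; by rewrite subnKC.
have inP E : E \in M -> exists2 Mi, Mi \in P & E \in Mi.
  by rewrite -covP => /bigcupP.
have uniq2 Mi Mj : Mi \in P -> Mj \in P -> (1 < #|Mi|)%N -> (1 < #|Mj|)%N -> Mi = Mj.
  move=> hi hj ci cj; apply/eqP; apply: contraTT hsum => ne; rewrite -ltnNge.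
  rewrite (bigD1 Mi) //= (bigD1 Mj) /=; last by rewrite hj eq_sym.
  exact: arith6.
have size2 Mi : Mi \in P -> (#|Mi| <= 2)%N.
  move=> hi; move: hsum; rewrite (bigD1 Mi) //=; exact: arith7.
have [p [q [pM qM pq samepq]]] : exists p q, [/\ p \in M, q \in M, p != q &
    forall Mj E1 E2, Mj \in P -> E1 \in Mj -> E2 \in Mj -> E1 != E2 ->
      (E1 \in [set p; q]) && (E2 \in [set p; q])].
  case: (boolP [exists Mi in P, 1 < #|Mi|]).
    case/exists_inP => Mi hi ci.
    have : #|Mi| == 2%N by rewrite eqn_leq size2.
    case/cards2P => p [q [pq eMi]].
    have MiM : Mi \subset M by rewrite -covP; exact: bigcup_sup.
    exists p, q; split => //.
    + by apply: (subsetP MiM); rewrite eMi !inE eqxx.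
    + by apply: (subsetP MiM); rewrite eMi !inE eqxx orbT.
    move=> Mj E1 E2 hj h1 h2 ne.
    have cj : (1 < #|Mj|)%N by apply/card_gt1P; exists E1, E2.
    by move: h1 h2; rewrite (uniq2 _ _ hj hi cj ci) eMi => -> ->.
  move=> hn; case/card_gt1P: M2 => p [q [pM qM pq]]; exists p, q; split => //.
  move=> Mj E1 E2 hj h1 h2 ne; exfalso; move/negP: hn; apply.
  by apply/exists_inP; exists Mj => //; apply/card_gt1P; exists E1, E2.
exists p, q; split => // E' hE' E'W.
case/existsP: (hE') => x /existsP [y /andP[exy /eqP eE']].
have xy : x != y by apply: contraTneq exy => ->; rewrite (proj2 sg).
have xW : x \in cover M by apply: (subsetP E'W); rewrite eE' !inE eqxx.
have yW : y \in cover M by apply: (subsetP E'W); rewrite eE' !inE eqxx orbT.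
case/bigcupP: xW => E1 E1M xE1; case/bigcupP: yW => E2 E2M yE2.
case: (eqVneq E1 E2) => [eq|ne].
  subst E2; apply/orP; left.
  suff -> : E' = E1 by [].
  apply/eqP; rewrite eqEcard (is_edge_card sg hE') (is_edge_card sg (matching_edge hM E1M)) leqnn andbT.
  by rewrite eE'; apply/subsetP => z; rewrite !inE => /orP[] /eqP ->.
case: (inP _ E1M) => Mi hi h1; case: (inP _ E2M) => Mj hj h2.
case: (eqVneq Mi Mj) => [eqij|neij]; last first.
  move: (hgap _ _ hi hj neij _ _ h1 h2) => /andP[_ /forall_inP /(_ x xE1) /forall_inP /(_ y yE2)].
  by rewrite exy.
subst Mj; case/andP: (samepq _ _ _ hi h1 h2 ne); rewrite !inE => h1' h2'.
apply/orP; right; rewrite eE'; apply/subsetP => z; rewrite !inE => /orP[] /eqP ->.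
  by case/orP: h1' => /eqP <-; rewrite xE1 ?orbT.
by case/orP: h2' => /eqP <-; rewrite yE2 ?orbT.
Qed.

End Adm.

Section Final.
Variable n : nat.
Variable e : rel 'I_n.
Variable K : fieldType.
Hypothesis sg : simple_graph e.

Lemma propbP (P : Prop) : propb P -> P.
Proof. by rewrite /propb; case: excluded_middle_informative. Qed.

Lemma reg_mono r r' : reg_at_least K (I2_mem e) r -> (r' <= r)%N -> reg_at_least K (I2_mem e) r'.
Proof.
case=> i [a [h1 h2]] h; exists i, a; split => //; apply: leq_trans h2.
by rewrite leq_add2r.
Qed.

Lemma arith8 (x y : nat) : x = 4%N -> x = (1 + y)%N -> (4 <= y)%N -> False.
Proof. lia. Qed.

Lemma small_case (M2 : {set {set 'I_n}}) : is_matching e M2 -> #|M2| = 2%N ->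
  reg_at_least K (I2_mem e) 4.
Proof.
move=> hM2 c2.
set W2 := cover M2.
have cW2 : #|W2| = 4%N by rewrite /W2 (matching_cover_card sg hM2) c2.
pose a := fun j : 'I_n => (j \in W2 : nat).
exists 0%N, a; split; last first.
  rewrite addn0 -cW2 -sum1_card big_mkcond /=.
  by apply: eq_leq; apply: eq_bigr => j _; rewrite /a; case: (j \in W2).
have k0 : set0 \in kbasis (I2_mem e) 0 a.
  rewrite inE cards0 eqxx /=; apply/andP; split; first by apply/forall_inP => j; rewrite inE.
  apply/existsP; exists M2; rewrite hM2 c2 eqxx /=.
  by apply/forall_inP => v vW; rewrite inE subn0 /a vW.
have kd : kdiff K (I2_mem e) 0 a = 0%R.
  apply/matrixP => i j; rewrite !mxE /= ifF //; apply/negbTE/negP => /andP[Fk _].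
  move: Fk; set F := enum_val i; rewrite inE => /and3P[/eqP cF /forall_inP FW /existsP [M' /and3P[hM' /eqP cM' /forall_inP hv]]].
  have sub : cover M' \subset W2 :\: F.
    apply/subsetP => v /hv; rewrite /a !inE.
    by case: (v \in W2); case: (v \in F).
  have FW2 : F \subset W2 by apply/subsetP => x /FW; rewrite /a lt0b.
  have c4 : #|cover M'| = 4%N by rewrite (matching_cover_card sg hM') cM'.
  move: (subset_leq_card sub); rewrite c4.
  case/cards1P: (introT eqP cF) => x Fx.
  rewrite Fx.
  have xW2 : x \in W2 by apply: (subsetP FW2); rewrite Fx set11.
  have := cardsD1 x W2; rewrite xW2 => h1 h2.
  exact: arith8 cW2 h1 h2.
rewrite /betti kd mxrank0 subn0 subn0.
by rewrite -lt0n; apply/card_gt0P; exists set0.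
Qed.

End Final.

Lemma arith9 (x : nat) : (2 < x)%N -> (x <= x.-1)%N -> False.
Proof. lia. Qed.

Theorem corollary4p11 (n : nat) (e : rel 'I_n) (K : fieldType) :
  simple_graph e -> (2 <= mat e)%N ->
  reg_at_least K (I2_mem e) (aim e 2 + 2).
Proof.
move=> sg hmat.
have [M0 hM0 c0] : exists2 M0, is_matching e M0 & (1 < #|M0|)%N.
  case: (boolP [exists M0, is_matching e M0 && (1 < #|M0|)%N]).
    by case/existsP => M0 /andP[h1 h2]; exists M0.
  move=> hn; exfalso.
  have : (mat e <= 1)%N.
    apply/bigmax_leqP => M hM; rewrite leqNgt; apply: contra hn => h.
    by apply/existsP; exists M; rewrite hM.
  by rewrite leqNgt hmat.
case/card_gt1P: c0 => E1 [E2 [h1 h2 ne]].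
have small : reg_at_least K (I2_mem e) 4.
  apply: (@small_case n e K sg [set E1; E2]); last by rewrite cards2 ne.
  by apply: (matching_sub hM0); apply/subsetP => x; rewrite !inE => /orP[] /eqP ->.
case: (leqP (aim e 2) 2) => ha.
  by apply: (reg_mono small); rewrite -(leq_add2r 2) in ha.
have [M hMa cM] : exists2 M, k_admissible e 2 M & (aim e 2 <= #|M|)%N.
  case: (boolP [exists M, propb (k_admissible e 2 M) && (aim e 2 <= #|M|)%N]).
    by case/existsP => M /andP[h1' h2']; exists M => //; exact: propbP.
  move=> hn; exfalso; apply: (arith9 ha).
  apply/bigmax_leqP => M hM; rewrite -ltnS prednK; last by apply: leq_trans ha.
  rewrite ltnNge; apply: contra hn => h.
  by apply/existsP; exists M; rewrite hM.
have m3 : (2 < #|M|)%N by apply: leq_trans cM.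
case: (adm_good sg hMa (ltnW m3)) => p [q [pM qM pq hgood]].
have hM : is_matching e M by case: hMa.
have [u up] : exists u, u \in p.
  apply/card_gt0P; by rewrite (is_edge_card sg (matching_edge hM pM)).
apply: (reg_mono (reg_main K sg hM pM qM pq up hgood m3)).
by rewrite leq_add2r.
Qed.
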